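(* For every closed guarded expression $\phi\in\mathcal{E}_0$, every $T$-coalgebra $C=(X,\xi)$ and every state $x\in X$: $x\in[\![\phi]\!]_C$ if and only if $x$ is behaviourally equivalent to $\phi$ regarded as a state of the coalgebra $(\mathcal{E}_0,\varepsilon)$. In particular, $\phi\in[\![\phi]\!]_{(\mathcal{E}_0,\varepsilon)}$ for all $\phi\in\mathcal{E}_0$.
   Context: Standing assumptions: $T:\mathbf{Set}\to\mathbf{Set}$ is a functor; $\mathcal{L}$ is a set of modalities with arities ($L/n$), each $L/n$ assigned an $n$-ary monotone singleton-preserving predicate lifting $[\![L]\!]$ for $T$ such that $\Lambda=\{[\![L]\!]\mid L\in\mathcal{L}\}$ is strongly expressive. (An $n$-ary predicate lifting is a family $\lambda_X:(\mathcal{P}X)^n\to\mathcal{P}(TX)$ with $\lambda_X(f^{-1}[A_1],\dots,f^{-1}[A_n])=(Tf)^{-1}[\lambda_Y(A_1,\dots,A_n)]$ for $f:X\to Y$; monotone if monotone in each argument; singleton-preserving if $|\lambda_X(\{x_1\},\dots,\{x_n\})|=1$ for all $x_i\in X$; $\Lambda$ strongly expressive if for every set $X$ and $t\in TX$ there are $\lambda/n\in\Lambda$, $x_i\in X$ with $\{t\}=\lambda_X(\{x_1\},\dots,\{x_n\})$.) Fix a set $V$ of variables. Expressions: $\phi::=z\mid\nu z.\,\phi\mid L(\phi_1,\dots,\phi_n)$. Closed: every variable occurrence bound by a $\nu$; guarded: every variable occurrence separated from its binding $\nu$ by at least one modality; $\mathcal{E}_0$ = closed guarded expressions. Semantics in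 $C=(X,\xi)$ under valuation $\kappa:V\to\mathcal{P}X$: $[\![z]\!]^\kappa=\kappa(z)$; $[\![L(\phi_1,\dots,\phi_n)]\!]^\kappa=\xi^{-1}[[\![L]\!]_X([\![\phi_1]\!]^\kappa,\dots,[\![\phi_n]\!]^\kappa)]$; $[\![\nu z.\phi]\!]^\kappa=$ greatest fixed point of $Y\mapsto[\![\phi]\!]^{\kappa[z\mapsto Y]}$; for closed $\phi$ write $[\![\phi]\!]_C$. The coalgebra $\varepsilon:\mathcal{E}_0\to T\mathcal{E}_0$ is defined by $\varepsilon(L(\phi_1,\dots,\phi_n))=$ the unique element of $[\![L]\!]_{\mathcal{E}_0}(\{\phi_1\},\dots,\{\phi_n\})$ and $\varepsilon(\nu x.\phi)=\varepsilon(\phi[\nu x.\phi/x])$ (well-defined by induction on the number of $\nu$'s not in the scope of a modality). States are behaviourally equivalent if coalgebra morphisms (maps $h$ with $Th\circ\xi=\zeta\circ h$) into a common coalgebra identify them. *)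

(* Defs.v *)
From Stdlib Require Import ClassicalEpsilon.
From mathcomp Require Import all_boot.
Set Implicit Arguments. Unset Strict Implicit. Unset Printing Implicit Defensive.

Definition pred_sub (X : Type) (A B : X -> Prop) : Prop := forall x, A x -> B x.

Definition eqdec (A : Type) (a b : A) : {a = b} + {a <> b} :=
  excluded_middle_informative (a = b).

Record is_functor (T : Type -> Type)
    (fmap : forall X Y : Type, (X -> Y) -> T X -> T Y) : Prop := {
  fmap_id : forall (X : Type) (t : T X), @fmap X X (fun x => x) t = t;
  fmap_comp : forall (X Y Z : Type) (f : X -> Y) (g : Y -> Z) (t : T X),
      @fmap X Z (fun x => g (f x)) t = @fmap Y Z g (@fmap X Y f t) }.

(* lam X : (P X)^n -> P (T X); an n-tuple of subsets is a map 'I_n -> (X -> Prop). *)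
Definition lifting (T : Type -> Type) (n : nat) : Type :=
  forall X : Type, ('I_n -> X -> Prop) -> T X -> Prop.

Section Liftings.
Variables (T : Type -> Type) (fmap : forall X Y : Type, (X -> Y) -> T X -> T Y).

Definition natural_lifting (n : nat) (lam : lifting T n) : Prop :=
  forall (X Y : Type) (f : X -> Y) (A : 'I_n -> Y -> Prop) (t : T X),
    lam X (fun i x => A i (f x)) t <-> lam Y A (@fmap X Y f t).

Definition monotone_lifting (n : nat) (lam : lifting T n) : Prop :=
  forall (X : Type) (A B : 'I_n -> X -> Prop),
    (forall i, pred_sub (A i) (B i)) -> pred_sub (lam X A) (lam X B).

Definition singleton_preserving (n : nat) (lam : lifting T n) : Prop :=
  forall (X : Type) (xs : 'I_n -> X),
    exists! t : T X, lam X (fun i x => x = xs i) t.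

Record is_pred_lifting (n : nat) (lam : lifting T n) : Prop := {
  pl_natural : natural_lifting lam;
  pl_monotone : monotone_lifting lam;
  pl_singleton : singleton_preserving lam }.

Definition strongly_expressive (L : Type) (ar : L -> nat)
    (lift : forall l : L, lifting T (ar l)) : Prop :=
  forall (X : Type) (t : T X),
    exists (l : L) (xs : 'I_(ar l) -> X),
      forall t' : T X, @lift l X (fun i x => x = xs i) t' <-> t' = t.

Definition coalg_morph (X Z : Type) (xi : X -> T X) (zeta : Z -> T Z) (h : X -> Z) : Prop :=
  forall x : X, @fmap X Z h (xi x) = zeta (h x).

Definition beh_equiv (X Y : Type) (xi : X -> T X) (upsilon : Y -> T Y) (x : X) (y : Y) : Prop :=
  exists (Z : Type) (zeta : Z -> T Z) (h : X -> Z) (k : Y -> Z),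
    coalg_morph xi zeta h /\ coalg_morph upsilon zeta k /\ h x = k y.
End Liftings.

Unset Implicit Arguments.
Inductive expr (V L : Type) (ar : L -> nat) : Type :=
| EVar (z : V)
| ENu (z : V) (phi : expr V L ar)
| EMod (l : L) (args : 'I_(ar l) -> expr V L ar).

Set Implicit Arguments.
Arguments EVar {V L ar} z.
Arguments ENu {V L ar} z phi.
Arguments EMod {V L ar} l args.

Section Expressions.
Variables (V L : Type) (ar : L -> nat).

Fixpoint closed_in (bound : V -> Prop) (phi : expr V L ar) : Prop :=
  match phi with
  | EVar z => bound z
  | ENu z psi => closed_in (fun w => w = z \/ bound w) psi
  | EMod l args => forall i, closed_in bound (args i)
  end.
Definition closed (phi : expr V L ar) : Prop := closed_in (fun _ => False) phi.

(* [unguarded] = variables whose binding nu is above the current position with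
   no modality in between; an occurrence of such a variable is not guarded. *)
Fixpoint guarded_in (unguarded : V -> Prop) (phi : expr V L ar) : Prop :=
  match phi with
  | EVar z => ~ unguarded z
  | ENu z psi => guarded_in (fun w => w = z \/ unguarded w) psi
  | EMod l args => forall i, guarded_in (fun _ => False) (args i)
  end.
Definition guarded (phi : expr V L ar) : Prop := guarded_in (fun _ => False) phi.

Definition E0 : Type := {phi : expr V L ar | closed phi /\ guarded phi}.

(* phi[psi/x] : substitution of (closed) psi for free occurrences of x *)
Fixpoint subst (psi : expr V L ar) (x : V) (phi : expr V L ar) : expr V L ar :=
  match phi with
  | EVar z => if eqdec z x then psi else EVar z
  | ENu z chi => if eqdec z x then ENu z chi else ENu z (subst psi x chi)
  | EMod l args => EMod l (fun i => subst psi x (args i))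
  end.

Definition upd (X : Type) (kappa : V -> X -> Prop) (z : V) (Y : X -> Prop) : V -> X -> Prop :=
  fun w => if eqdec w z then Y else kappa w.

Definition gfp (X : Type) (F : (X -> Prop) -> (X -> Prop)) : X -> Prop :=
  fun x => exists Y : X -> Prop, pred_sub Y (F Y) /\ Y x.

Variables (T : Type -> Type) (lift : forall l : L, lifting T (ar l)).

Fixpoint sem (X : Type) (xi : X -> T X) (phi : expr V L ar) (kappa : V -> X -> Prop)
    : X -> Prop :=
  match phi with
  | EVar z => kappa z
  | ENu z psi => gfp (fun Y => sem xi psi (upd kappa z Y))
  | EMod l args => fun x => @lift l X (fun i => sem xi (args i) kappa) (xi x)
  end.

(* semantics of closed expressions (independent of the valuation; we use the empty one) *)
Definition semC (X : Type) (xi : X -> T X) (phi : expr V L ar) : X -> Prop :=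
  sem xi phi (fun _ _ => False).

(* eps : E0 -> T E0 is the coalgebra of the paper, characterized by its two defining
   equations:
   - eps(L(phi_1..phi_n)) is (the unique element) in [[L]]_{E0}({phi_1},...,{phi_n});
   - eps(nu x. phi) = eps(phi[nu x. phi / x]). *)
Definition is_eps (eps : E0 -> T E0) : Prop :=
  (forall (p : E0) (l : L) (args : 'I_(ar l) -> expr V L ar),
      proj1_sig p = EMod l args ->
      @lift l E0 (fun i (e : E0) => proj1_sig e = args i) (eps p)) /\
  (forall (p q : E0) (z : V) (phi : expr V L ar),
      proj1_sig p = ENu z phi ->
      proj1_sig q = subst (ENu z phi) z phi ->
      eps p = eps q).
End Expressions.

(* Main.v *)
Require Import Defs.
From Stdlib Require Import ClassicalEpsilon FunctionalExtensionality PropExtensionality ProofIrrelevance.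
From Stdlib Require Import Relation_Operators.
From mathcomp Require Import all_boot.
Require Import Defs.
Set Implicit Arguments. Unset Strict Implicit.

Section Syn.
Variables (V L : Type) (ar : L -> nat).
Notation ex := (expr V L ar).

Lemma closed_in_mono (phi : ex) : forall B B' : V -> Prop,
  closed_in B phi -> (forall w, B w -> B' w) -> closed_in B' phi.
Proof.
induction phi as [z|z psi IH|l a IH]; simpl; intros B B' H HB.
- by apply HB.
- apply: (IH _ _ H); intros w [->|Hw]; [left|right; apply HB]; auto.
- intro i; exact: (IH i _ _ (H i) HB).
Qed.

Lemma guarded_in_anti (phi : ex) : forall U U' : V -> Prop,
  guarded_in U phi -> (forall w, U' w -> U w) -> guarded_in U' phi.
Proof.
induction phi as [z|z psi IH|l a IH]; simpl; intros U U' H HU.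
- intro Hz; apply H, HU, Hz.
- apply: (IH _ _ H); intros w [->|Hw]; [left|right; apply HU]; auto.
- exact H.
Qed.

Lemma guarded_closed_gen (psi : ex) : forall B U U' : V -> Prop,
  closed_in B psi -> guarded_in U psi -> (forall w, U' w -> U w \/ ~ B w) ->
  guarded_in U' psi.
Proof.
induction psi as [z|z psi IH|l a IH]; simpl; intros B U U' Hc Hg HU.
- intro Hz; destruct (HU z Hz) as [H|H]; auto.
- apply: (IH _ _ _ Hc Hg); intros w [->|Hw]; first by left; left.
  destruct (HU w Hw) as [H|H]; first by left; right.
  destruct (eqdec w z) as [->|Hne]; first by left; left.
  right; intros [H'|H']; auto.
- exact Hg.
Qed.

Lemma guarded_closed (psi : ex) U : closed psi -> guarded psi -> guarded_in U psi.
Proof.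
intros Hc Hg.
exact (@guarded_closed_gen psi (fun _ => False) (fun _ => False) U Hc Hg (fun w _ => or_intror (fun f => f))).
Qed.

Lemma subst_guarded (psi : ex) z (phi : ex) : forall U,
  closed psi -> guarded psi -> guarded_in U phi -> guarded_in U (subst psi z phi).
Proof.
induction phi as [w|w chi IH|l a IH]; simpl; intros U Hc Hg H.
- destruct (eqdec w z); simpl; auto. exact: guarded_closed.
- destruct (eqdec w z); simpl; auto.
- intro i; apply IH; auto.
Qed.

Lemma subst_closed (psi : ex) z (phi : ex) : forall B B' : V -> Prop,
  closed psi -> closed_in B phi -> (forall w, B w -> w = z \/ B' w) ->
  closed_in B' (subst psi z phi).
Proof.
induction phi as [w|w chi IH|l a IH]; simpl; intros B B' Hc H HB.
- destruct (eqdec w z) as [e|ne]; simpl.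
  + exact (@closed_in_mono psi (fun _ => False) B' Hc (fun w (f:False) => match f with end)).
  + destruct (HB w H); [contradiction|assumption].
- destruct (eqdec w z) as [->|ne]; simpl.
  + apply: (closed_in_mono H). intros u [->|Hu]; first by left.
    destruct (HB u Hu) as [->|Hu']; [left|right]; auto.
  + apply: (IH _ _ Hc H). intros u [->|Hu]; first by right; left.
    destruct (HB u Hu) as [->|Hu']; [left|right; right]; auto.
- intro i; apply: IH; eauto.
Qed.

Lemma unfold_E0 z (phi : ex) : closed (ENu z phi) -> guarded (ENu z phi) ->
  closed (subst (ENu z phi) z phi) /\ guarded (subst (ENu z phi) z phi).
Proof.
intros Hc Hg; split.
- apply: (@subst_closed _ _ _ (fun w => w = z \/ False) (fun _ => False) Hc Hc); intros w [->|[]]; by left.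
- unfold guarded; apply: (guarded_in_anti (U := fun w => w = z \/ False)); last by [].
  apply subst_guarded; auto.
Qed.

Fixpoint tnu (phi : ex) : nat :=
  match phi with ENu _ psi => (tnu psi).+1 | _ => 0 end.

Lemma tnu_subst (psi : ex) z (phi : ex) : forall U : V -> Prop,
  guarded_in U phi -> U z -> tnu (subst psi z phi) = tnu phi.
Proof.
induction phi as [w|w chi IH|l a IH]; simpl; intros U H Hz.
- destruct (eqdec w z) as [->|]; [contradiction|reflexivity].
- destruct (eqdec w z); simpl; auto. f_equal; apply: (IH _ H); by right.
- reflexivity.
Qed.

Inductive Unf : ex -> ex -> Prop :=
| UMod l a : Unf (EMod l a) (EMod l a)
| UNu z phi h : Unf (subst (ENu z phi) z phi) h -> Unf (ENu z phi) h.

Lemma Unf_det e h1 : Unf e h1 -> forall h2, Unf e h2 -> h1 = h2.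
Proof.
induction 1 as [l a|z phi h H IH]; intros h2 H2.
- remember (EMod l a) as e eqn:Ee; destruct H2; [by rewrite Ee|discriminate].
- remember (ENu z phi) as e eqn:Ee; destruct H2; first discriminate.
  injection Ee as -> ->; exact: IH.
Qed.

Lemma Unf_E0 e h : Unf e h -> closed e -> guarded e -> closed h /\ guarded h.
Proof.
induction 1 as [l a|z phi h H IH]; intros Hc Hg; first by split.
destruct (unfold_E0 Hc Hg); auto.
Qed.

Lemma Unf_EMod e h : Unf e h -> exists l a, h = EMod l a.
Proof. induction 1; eauto. Qed.

Lemma Unf_exists n : forall e, tnu e = n -> closed e -> guarded e ->
  exists l a, Unf e (EMod l a).
Proof.
induction n as [|n IH]; intros [z|z phi|l a] Htn Hc Hg; simpl in *;
  try discriminate; try (by case: Hc); try (by exists l, a; constructor).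
destruct (unfold_E0 Hc Hg) as [Hc' Hg'].
destruct (IH (subst (ENu z phi) z phi)) as [l [a H]]; auto.
- rewrite (tnu_subst (ENu z phi) (U := fun w => w = z \/ False) Hg); [congruence|by left].
- exists l, a; by constructor.
Qed.

End Syn.


Section Sem.
Variables (T : Type -> Type) (fmap : forall X Y : Type, (X -> Y) -> T X -> T Y).
Unset Implicit Arguments.
Variables (V L : Type) (ar : L -> nat) (lift : forall l : L, lifting T (ar l)).
Set Implicit Arguments.
Hypothesis Hlift : forall l : L, is_pred_lifting fmap (lift l).
Notation ex := (expr V L ar).

Lemma sem_mono X (xi : X -> T X) (phi : ex) : forall kappa kappa',
  (forall z, pred_sub (kappa z) (kappa' z)) ->
  pred_sub (sem lift xi phi kappa) (sem lift xi phi kappa').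
Proof.
induction phi as [z|z psi IH|l a IH]; simpl; intros k k' H.
- exact: H.
- intros x [Y [HY Yx]]; exists Y; split; last by [].
  intros y Yy; refine (IH _ _ _ y (HY y Yy)).
  intros w; unfold upd; destruct (eqdec w z); [by []|exact: H].
- intros x Hx; apply: (pl_monotone (Hlift l) _ Hx).
  intro i; exact: IH.
Qed.

Lemma sem_closed X (xi : X -> T X) (phi : ex) : forall B kappa kappa',
  closed_in B phi -> (forall w, B w -> kappa w = kappa' w) ->
  sem lift xi phi kappa = sem lift xi phi kappa'.
Proof.
induction phi as [z|z psi IH|l a IH]; simpl; intros B k k' Hc H.
- exact: H.
- f_equal; apply functional_extensionality => Y.
  apply: (IH _ _ _ Hc). intros w Hw; unfold upd; destruct (eqdec w z); first by [].
  destruct Hw; [contradiction|exact: H].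
- apply functional_extensionality => x; f_equal.
  apply functional_extensionality => i; exact: (IH i _ _ _ (Hc i) H).
Qed.

Lemma sem_subst X (xi : X -> T X) (psi : ex) z (phi : ex) : forall kappa,
  closed psi ->
  sem lift xi (subst psi z phi) kappa = sem lift xi phi (upd kappa z (sem lift xi psi kappa)).
Proof.
induction phi as [w|w chi IH|l a IH]; simpl; intros k Hc.
- unfold upd; destruct (eqdec w z); reflexivity.
- destruct (eqdec w z) as [->|ne]; simpl.
  + f_equal; apply functional_extensionality => Y; f_equal.
    apply functional_extensionality => u; unfold upd; destruct (eqdec u z); reflexivity.
  + f_equal; apply functional_extensionality => Y. rewrite IH //.
    rewrite (sem_closed (B := fun _ => False) (kappa' := k) xi Hc) //.
    f_equal; apply functional_extensionality => u; unfold upd.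
    destruct (eqdec u z); destruct (eqdec u w); simpl; congruence.
- apply functional_extensionality => x; f_equal.
  apply functional_extensionality => i; exact: IH.
Qed.

Lemma gfp_fix X (F : (X -> Prop) -> X -> Prop) :
  (forall A B, pred_sub A B -> pred_sub (F A) (F B)) -> gfp F = F (gfp F).
Proof.
intros HF; apply functional_extensionality => x; apply propositional_extensionality; split.
- intros [Y [HY Yx]]. apply: (HF Y); last exact: HY.
  intros y Yy; exists Y; split; assumption.
- intros Hx; exists (F (gfp F)); split; last by [].
  apply HF; intros y [Y [HY Yy]]. apply: (HF Y); last exact: HY.
  intros u Yu; exists Y; split; assumption.
Qed.

Lemma semC_unfold X (xi : X -> T X) z (phi : ex) : closed (ENu z phi) ->
  semC lift xi (ENu z phi) = semC lift xi (subst (ENu z phi) z phi).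
Proof.
intros Hc; unfold semC; rewrite sem_subst //; simpl.
apply gfp_fix => A B HAB; apply sem_mono => w; unfold upd.
destruct (eqdec w z); [exact HAB|by []].
Qed.

Lemma semC_Unf X (xi : X -> T X) (e h : ex) : Unf e h -> closed e ->
  semC lift xi e = semC lift xi h.
Proof.
induction 1 as [l a|z phi h H IH]; intros Hc; first by [].
rewrite semC_unfold // IH //.
apply: (@subst_closed _ _ _ _ _ _ (fun w => w = z \/ False) (fun _ => False) Hc Hc).
intros w [->|[]]; by left.
Qed.

Lemma sem_morph X Z (xi : X -> T X) (zeta : Z -> T Z) (h : X -> Z) :
  coalg_morph fmap xi zeta h -> forall (phi : ex) kappa kappa',
  (forall z x, kappa z x <-> kappa' z (h x)) ->
  forall x, sem lift xi phi kappa x <-> sem lift zeta phi kappa' (h x).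
Proof.
intros Hh phi; induction phi as [z|z psi IH|l a IH]; simpl; intros k k' Hk.
- exact: Hk.
- intros x; split.
  + intros [Y [HY Yx]].
    exists (fun zz => exists y, Y y /\ h y = zz); split; last by exists x.
    intros zz [y [Yy <-]].
    apply (IH (upd k z (fun y => exists y', Y y' /\ h y' = h y))).
    * intros w u; unfold upd; destruct (eqdec w z); [tauto|exact: Hk].
    * refine (sem_mono _ (HY y Yy)) => w; unfold upd; destruct (eqdec w z); last by [].
      intros u Yu; exists u; split; auto.
  + intros [Y' [HY Yx]].
    exists (fun y => Y' (h y)); split; last by [].
    intros y Yy. apply (IH _ (upd k' z Y')).
    * intros w u; unfold upd; destruct (eqdec w z); [tauto|exact: Hk].
    * exact: HY.
- intros x.
  have E : (fun i => sem lift xi (a i) k) = (fun i y => sem lift zeta (a i) k' (h y)).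
    apply functional_extensionality => i; apply functional_extensionality => y.
    apply propositional_extensionality; exact: IH.
  rewrite E -Hh. exact: (pl_natural (Hlift l)).
Qed.

End Sem.


Lemma sig_eq_pi (A : Type) (P : A -> Prop) (a b : sig P) : proj1_sig a = proj1_sig b -> a = b.
Proof.
destruct a as [a pa], b as [b pb]; simpl; intros ->; f_equal; apply proof_irrelevance.
Qed.

Section Subst.
Variables (V L : Type) (ar : L -> nat).
Notation ex := (expr V L ar).

Definition rem (rho : V -> option ex) z : V -> option ex :=
  fun w => if eqdec w z then None else rho w.
Definition ext (rho : V -> option ex) z c : V -> option ex :=
  fun w => if eqdec w z then Some c else rho w.

Fixpoint ssubst (rho : V -> option ex) (phi : ex) : ex :=
  match phi with
  | EVar z => match rho z with Some c => c | None => EVar z end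
  | ENu z psi => ENu z (ssubst (rem rho z) psi)
  | EMod l a => EMod l (fun i => ssubst rho (a i))
  end.

Lemma subst_closed_id (c : ex) z (d : ex) : forall B : V -> Prop,
  closed_in B d -> ~ B z -> subst c z d = d.
Proof.
induction d as [w|w chi IH|l a IH]; simpl; intros B H Hz.
- destruct (eqdec w z) as [->|]; [contradiction|reflexivity].
- destruct (eqdec w z); first reflexivity.
  simpl; f_equal; refine (IH _ H _); intros [Hq|Hq]; auto.
- f_equal; apply functional_extensionality => i; exact: (IH i _ (H i)).
Qed.

Lemma subst_ssubst (c : ex) z (psi : ex) : forall rho,
  (forall w d, rho w = Some d -> closed d) -> closed c ->
  subst c z (ssubst (rem rho z) psi) = ssubst (ext rho z c) psi.
Proof.
induction psi as [w|w chi IH|l a IH]; simpl; intros rho Hrho Hc.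
- unfold rem, ext; destruct (eqdec w z) as [->|ne]; simpl.
  + destruct (eqdec z z); [reflexivity|contradiction].
  + destruct (rho w) as [d|] eqn:E.
    * exact (@subst_closed_id c z d (fun _ => False) (Hrho w d E) (fun f => f)).
    * simpl; destruct (eqdec w z); [contradiction|reflexivity].
- destruct (eqdec w z) as [->|ne]; simpl.
  + f_equal; f_equal; apply functional_extensionality => u; unfold rem, ext.
    destruct (eqdec u z); reflexivity.
  + f_equal.
    have E1 : rem (rem rho z) w = rem (rem rho w) z.
      apply functional_extensionality => u; unfold rem.
      destruct (eqdec u z); destruct (eqdec u w); reflexivity.
    have E2 : ext (rem rho w) z c = rem (ext rho z c) w.
      apply functional_extensionality => u; unfold rem, ext.
      destruct (eqdec u z); destruct (eqdec u w); simpl; congruence.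
    rewrite E1 IH // ?E2 //.
    intros u d; unfold rem; destruct (eqdec u w); [discriminate|exact: Hrho].
- f_equal; apply functional_extensionality => i; exact: IH.
Qed.

Lemma ssubst_none (phi : ex) : forall rho, (forall z, rho z = None) -> ssubst rho phi = phi.
Proof.
induction phi as [w|w chi IH|l a IH]; simpl; intros rho H.
- by rewrite H.
- f_equal; apply IH => u; unfold rem; destruct (eqdec u w); simpl; [reflexivity|exact (H u)].
- f_equal; apply functional_extensionality => i; exact: IH.
Qed.
End Subst.


Section Bisim.
Variables (T : Type -> Type) (fmap : forall X Y : Type, (X -> Y) -> T X -> T Y).
Hypothesis HT : is_functor fmap.

Lemma beh_from_rel (X Y : Type) (xi : X -> T X) (ups : Y -> T Y) (R : X -> Y -> Prop)
  (HR : forall (Z : Type) (g1 : X -> Z) (g2 : Y -> Z),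
        (forall x y, R x y -> g1 x = g2 y) ->
        forall x y, R x y -> fmap g1 (xi x) = fmap g2 (ups y))
  x y : R x y -> beh_equiv fmap xi ups x y.
Proof.
intros Rxy.
pose Rs : (X + Y)%type -> (X + Y)%type -> Prop :=
  fun s1 s2 => match s1, s2 with inl x, inr y => R x y | _, _ => False end.
pose Z := {c : (X + Y)%type -> Prop | exists s, c = clos_refl_sym_trans _ Rs s}.
pose q : (X + Y)%type -> Z := fun s => exist _ (clos_refl_sym_trans _ Rs s) (ex_intro _ s erefl).
have q_eq : forall s1 s2, clos_refl_sym_trans _ Rs s1 s2 -> q s1 = q s2.
  intros s1 s2 H; apply sig_eq_pi; simpl; apply functional_extensionality => s.
  apply propositional_extensionality; split => H'.
  - apply rst_trans with s1; [apply rst_sym|]; assumption.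
  - apply rst_trans with s2; assumption.
have q_inv : forall s1 s2, q s1 = q s2 -> clos_refl_sym_trans _ Rs s1 s2.
  intros s1 s2 H; have H' := f_equal (@proj1_sig _ _) H; simpl in H'; rewrite H'.
  apply rst_refl.
pose g : (X + Y)%type -> T (X + Y)%type := fun s =>
  match s with inl x => fmap inl (xi x) | inr y => fmap inr (ups y) end.
have WD : forall s1 s2, clos_refl_sym_trans _ Rs s1 s2 -> fmap q (g s1) = fmap q (g s2).
  induction 1 as [s1 s2 H| s | s1 s2 _ IH | s1 s2 s3 _ IH1 _ IH2];
    [| reflexivity | by rewrite IH | by rewrite IH1].
  destruct s1 as [x1|y1], s2 as [x2|y2]; try (by case H).
  simpl; rewrite -!(fmap_comp HT).
  apply: (HR Z (fun x => q (inl x)) (fun y => q (inr y))); last exact H.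
  intros x' y' H'; apply q_eq; apply rst_step; exact H'.
pose repr : Z -> (X + Y)%type :=
  fun c => proj1_sig (constructive_indefinite_description _ (proj2_sig c)).
have q_repr : forall c, q (repr c) = c.
  intro c; apply sig_eq_pi; simpl; unfold repr.
  destruct (constructive_indefinite_description _ _) as [s Hs]; simpl; symmetry; exact Hs.
pose zeta : Z -> T Z := fun c => fmap q (g (repr c)).
have morph : forall s, zeta (q s) = fmap q (g s).
  intro s; apply WD; apply q_inv; apply q_repr.
exists Z, zeta, (fun x => q (inl x)), (fun y => q (inr y)); split; [|split].
- intro x'; rewrite morph /= -(fmap_comp HT) //.
- intro y'; rewrite morph /= -(fmap_comp HT) //.
- apply q_eq, rst_step; exact Rxy.
Qed.
End Bisim.


Section Eps.
Variables (T : Type -> Type) (fmap : forall X Y : Type, (X -> Y) -> T X -> T Y).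
Unset Implicit Arguments.
Variables (V L : Type) (ar : L -> nat) (lift : forall l : L, lifting T (ar l)).
Set Implicit Arguments.
Hypothesis Hlift : forall l : L, is_pred_lifting fmap (lift l).
Notation ex := (expr V L ar).
Notation E := (E0 V ar).

Lemma eps_Unf (eps : E -> T E) : is_eps lift eps -> forall (e h : ex), Unf e h ->
  forall p : E, proj1_sig p = e ->
  match h with EMod l a => lift l E (fun i e' => proj1_sig e' = a i) (eps p) | _ => False end.
Proof.
intros [H1 H2] e h Hu; induction Hu as [l a|z phi h Hu IH]; intros p Hp.
- exact: (H1 p l a Hp).
- have [Hc Hg] := proj2_sig p; rewrite Hp in Hc Hg.
  pose q : E := exist _ _ (unfold_E0 Hc Hg).
  rewrite (H2 p q z phi Hp erefl). exact: IH.
Qed.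

Definition Pe (p : E) (t : T E) : Prop := exists h, Unf (proj1_sig p) h /\
  match h with EMod l a => lift l E (fun i e => proj1_sig e = a i) t | _ => False end.

Lemma Pe_ex p : exists t, Pe p t.
Proof.
have [Hc Hg] := proj2_sig p.
destruct (Unf_exists erefl Hc Hg) as [l [a Hu]].
destruct (Unf_E0 Hu Hc Hg) as [Hc' Hg'].
pose xs (i : 'I_(ar l)) : E := exist _ (a i) (conj (Hc' i) (Hg' i)).
destruct (pl_singleton (Hlift l) xs) as [t [Ht _]].
exists t, (EMod l a); split; first exact Hu.
apply: (pl_monotone (Hlift l) _ Ht). intros i e ->; reflexivity.
Qed.

Lemma Pe_uniq p t1 t2 : Pe p t1 -> Pe p t2 -> t1 = t2.
Proof.
have [Hc Hg] := proj2_sig p.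
intros [h1 [U1 M1]] [h2 [U2 M2]]. rewrite <- (Unf_det U1 U2) in M2.
destruct (Unf_EMod U1) as [l [a ->]].
destruct (Unf_E0 U1 Hc Hg) as [Hc' Hg'].
pose xs (i : 'I_(ar l)) : E := exist _ (a i) (conj (Hc' i) (Hg' i)).
destruct (pl_singleton (Hlift l) xs) as [t [_ Hu]].
have conv : forall t', lift l E (fun i e => proj1_sig e = a i) t' ->
    lift l E (fun i x => x = xs i) t'.
  intros t' Ht'; apply: (pl_monotone (Hlift l) _ Ht'); intros i e He; apply sig_eq_pi; exact He.
by rewrite -(Hu t1 (conv _ M1)) -(Hu t2 (conv _ M2)).
Qed.

Definition eps0 (p : E) : T E := proj1_sig (constructive_indefinite_description _ (Pe_ex p)).
Lemma eps0_spec p : Pe p (eps0 p).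
Proof. exact (proj2_sig (constructive_indefinite_description _ (Pe_ex p))). Qed.

Lemma eps0_is : is_eps lift eps0.
Proof.
split.
- intros p l args Hp. destruct (eps0_spec p) as [h [U M]]. rewrite Hp in U.
  by rewrite (Unf_det U (UMod args)) in M.
- intros p q z phi Hp Hq. apply (@Pe_uniq p); first exact: eps0_spec.
  destruct (eps0_spec q) as [h [U M]]. exists h; split; last exact M.
  rewrite Hp; constructor; rewrite -Hq; exact U.
Qed.

Definition clE (eps : E -> T E) (A : E -> Prop) : Prop :=
  forall e e', eps e = eps e' -> A e -> A e'.

Lemma sem_cl (eps : E -> T E) (phi : ex) : forall kappa,
  (forall z, clE eps (kappa z)) -> clE eps (sem lift eps phi kappa).
Proof.
induction phi as [z|z psi IH|l a IH]; simpl; intros k Hk.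
- exact: Hk.
- intros e e' Ee [Y [HY Ye]].
  exists (fun x => exists y, Y y /\ eps y = eps x); split; last by exists e.
  intros x [y [Yy Exy]].
  refine (IH (upd k z (fun x => exists y, Y y /\ eps y = eps x)) _ y x Exy _).
  + intro w; unfold upd; destruct (eqdec w z); last exact: Hk.
    intros a1 b1 Eab [y' [Yy' E']]; exists y'; split; congruence.
  + refine (sem_mono Hlift _ (HY y Yy)) => w; unfold upd; destruct (eqdec w z); last by [].
    intros u Yu; exists u; auto.
- intros e e' Ee H; rewrite -Ee; exact H.
Qed.

Lemma K3gen (eps : E -> T E) (He : is_eps lift eps) (phi : ex) : forall rho kappa (p : E),
  proj1_sig p = ssubst rho phi ->
  (forall z d, rho z = Some d -> closed d /\ forall q : E, proj1_sig q = d -> kappa z q) ->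
  (forall z, clE eps (kappa z)) ->
  sem lift eps phi kappa p.
Proof.
induction phi as [z|z psi IH|l a IH]; intros rho k p Hp Hr Hk.
- simpl in Hp |- *. destruct (rho z) as [d|] eqn:E.
  + exact: ((Hr z d E).2 p Hp).
  + destruct p as [pp [pc pg]]; simpl in Hp; subst pp. case: pc.
- simpl in Hp |- *. set phi' := ssubst (rem rho z) psi in Hp.
  have [Hc Hg] := proj2_sig p; rewrite Hp in Hc Hg.
  pose q : E := exist _ _ (unfold_E0 Hc Hg).
  have Epq : eps p = eps q := He.2 p q z phi' Hp erefl.
  exists (fun e => eps e = eps p); split; last reflexivity.
  have Hk' : forall w, clE eps (upd k z (fun e => eps e = eps p) w).
    intro w; unfold upd; destruct (eqdec w z); last exact: Hk.
    intros a1 b1 Eab Ha; congruence.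
  intros e Ee. refine (sem_cl Hk' (e := q) _ _); first by rewrite -Epq Ee.
  apply: (IH (ext rho z (ENu z phi'))).
  + simpl; rewrite /phi' subst_ssubst //.
    intros w d Hw; exact: (Hr w d Hw).1.
  + intros w d; unfold ext, upd; destruct (eqdec w z) as [->|ne].
    * intros [= <-]; split; first exact Hc.
      intros q' Hq'; have -> : q' = p by apply sig_eq_pi; rewrite Hq' Hp.
      reflexivity.
    * exact: Hr.
  + exact Hk'.
- simpl. apply: (pl_monotone (Hlift l) _ (He.1 p l (fun i => ssubst rho (a i)) Hp)).
  intros i e He'. exact: (IH i rho k e He' Hr Hk).
Qed.

Lemma part2 (eps : E -> T E) (He : is_eps lift eps) (phi : E) :
  semC lift eps (proj1_sig phi) phi.
Proof.
apply: (K3gen He (rho := fun _ => None)).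
- by rewrite ssubst_none.
- by [].
- intros _ a1 b1 _ f; exact f.
Qed.
End Eps.

Unset Implicit Arguments.

Theorem mainTheorem16
  (T : Type -> Type) (fmap : forall X Y : Type, (X -> Y) -> T X -> T Y)
  (HT : is_functor fmap)
  (L : Type) (ar : L -> nat) (lift : forall l : L, lifting T (ar l))
  (Hlift : forall l : L, is_pred_lifting fmap (lift l))
  (Hexpr : strongly_expressive lift)
  (V : Type) :
  (exists eps : E0 V ar -> T (E0 V ar), is_eps lift eps) /\
  (forall eps : E0 V ar -> T (E0 V ar), is_eps lift eps ->
     (forall (phi : E0 V ar) (X : Type) (xi : X -> T X) (x : X),
        semC lift xi (proj1_sig phi) x <-> beh_equiv fmap xi eps x phi) /\
     (forall phi : E0 V ar, semC lift eps (proj1_sig phi) phi)).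
Proof.
split.
- exists (eps0 Hlift); exact: eps0_is.
- intros eps He; split; last exact: (part2 Hlift He).
  intros phi X xi x; split.
  + intro Hs.
    apply: (beh_from_rel HT (R := fun x e => semC lift xi (proj1_sig e) x)); last exact Hs.
    intros Z g1 g2 Hgg x' e Hxe.
    have [Hc Hg0] := proj2_sig e.
    destruct (Unf_exists erefl Hc Hg0) as [l [a Hu]].
    destruct (Unf_E0 Hu Hc Hg0) as [Hc' Hg'].
    pose xs (i : 'I_(ar l)) : E0 V ar := exist _ (a i) (conj (Hc' i) (Hg' i)).
    rewrite (semC_Unf Hlift xi Hu Hc) in Hxe.
    have He' := eps_Unf He Hu (p := e) erefl. simpl in He'.
    destruct (pl_singleton (Hlift l) (fun i => g2 (xs i))) as [t [_ Hun]].
    rewrite -(Hun (fmap _ _ g1 (xi x'))) ?(Hun (fmap _ _ g2 (eps e))) //.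
    * apply (pl_natural (Hlift l)).
      apply: (pl_monotone (Hlift l) _ He'). intros i e' He''.
      f_equal; apply sig_eq_pi; exact He''.
    * apply (pl_natural (Hlift l)).
      apply: (pl_monotone (Hlift l) _ Hxe). intros i y Hy.
      exact: (Hgg y (xs i) Hy).
  + intros [Z [zeta [h [k [Hh [Hk Ehk]]]]]].
    have A1 := sem_morph Hlift Hh (proj1_sig phi)
      (kappa := fun _ _ => False) (kappa' := fun _ _ => False) (fun _ _ => iff_refl _) x.
    have A2 := sem_morph Hlift Hk (proj1_sig phi)
      (kappa := fun _ _ => False) (kappa' := fun _ _ => False) (fun _ _ => iff_refl _) phi.
    unfold semC; apply A1; rewrite Ehk; apply A2; exact: (part2 Hlift He).
Qed.
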